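(* For every integer $n \ge 1$, $\Lambda_{n+1} \ge \Lambda_n$; that is, $\Lambda_n$ is nondecreasing in $n$.
   Context: All graphs are finite, simple and undirected (not necessarily connected). For a graph $G=(V,E)$ and a vertex $v\in V$, let $N_v$ be the set of neighbours of $v$. The local complementation (LC) of $G$ at $v$ is the graph $G^v$ obtained from $G$ by complementing the subgraph induced on $N_v$ (i.e., for each pair of distinct $a,b\in N_v$, the edge $ab$ is added if absent and removed if present; all other adjacencies are unchanged). The LC orbit $[G]$ of $G$ is the set of all graphs obtainable from $G$ by a finite sequence of local complementations (graphs are considered up to isomorphism). Let $\alpha(G)$ denote the independence number of $G$ (size of a maximum independent set), and define $\lambda(G)=\max_{H\in[G]}\alpha(H)$. Let $\Lambda_n$ be the minimum of $\lambda(G)$ over all graphs $G$ on $n$ vertices. *)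

(* Defs.v *)
From mathcomp Require Import all_boot.
Set Implicit Arguments. Unset Strict Implicit. Unset Printing Implicit Defensive.

Definition graph (n : nat) : finType := {ffun 'I_n * 'I_n -> bool}.

Definition adj n (G : graph n) (x y : 'I_n) : bool := G (x, y).

Definition simple_graph n (G : graph n) : bool :=
  [forall x, forall y, adj G x y == adj G y x] && [forall x, ~~ adj G x x].

Definition empty_graph n : graph n := [ffun _ => false].

Definition lc n (G : graph n) (v : 'I_n) : graph n :=
  [ffun p : 'I_n * 'I_n =>
     if [&& p.1 != p.2, adj G v p.1 & adj G v p.2] then ~~ G p else G p].

Definition lc_step n : rel (graph n) := fun G H => [exists v, H == lc G v].

Definition lc_orbit n (G : graph n) : pred (graph n) := fun H => connect (@lc_step n) G H.

Definition independent n (G : graph n) (S : {set 'I_n}) : bool :=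
  [forall x in S, forall y in S, ~~ adj G x y].

Definition alpha n (G : graph n) : nat :=
  \max_(S : {set 'I_n} | independent G S) #|S|.

Definition lambda n (G : graph n) : nat :=
  \max_(H in lc_orbit G) alpha H.

Definition Lambda (n : nat) : nat :=
  lambda [arg min_(G < empty_graph n | simple_graph G) lambda G].

(* Main.v *)
Require Import Defs.
From mathcomp Require Import all_boot.
Set Implicit Arguments. Unset Strict Implicit. Unset Printing Implicit Defensive.

Section R.
Variable n : nat.
Definition w (u : 'I_n) : 'I_n.+1 := widen_ord (leqnSn n) u.
Lemma w_inj : injective w.
Proof. by move=> a b /(congr1 val) /= /val_inj. Qed.
Definition restr (G : graph n.+1) : graph n := [ffun p => G (w p.1, w p.2)].

Lemma restr_lc G u : restr (lc G (w u)) = lc (restr G) u.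
Proof.
apply/ffunP=> [[x y]]; rewrite /restr /lc /adj !ffunE /=.
by rewrite (inj_eq w_inj).
Qed.

Lemma lift_orbit G H : lc_orbit (restr G) H ->
  exists H', lc_orbit G H' /\ restr H' = H.
Proof.
rewrite /lc_orbit => /connectP [p]; elim: p G => [|x p IH] G /=.
  by move=> _ ->; exists G; split.
case/andP=> /existsP [v /eqP ->] Hp Hl.
rewrite -restr_lc in Hp Hl.
have [H' [H1 H2]] := IH _ Hp Hl.
exists H'; split=> //; apply: connect_trans H1.
by apply: connect1; apply/existsP; exists (w v).
Qed.

Lemma alpha_restr H : alpha (restr H) <= alpha H.
Proof.
apply/bigmax_leqP=> S indS.
rewrite -(card_imset S w_inj).
apply: (leq_bigmax_cond (P := fun S => independent H S)).
apply/forallP=> x; apply/implyP=> /imsetP [a aS ->].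
apply/forallP=> y; apply/implyP=> /imsetP [b bS ->].
move/forallP: indS => /(_ a) /implyP /(_ aS) /forallP /(_ b) /implyP /(_ bS).
by rewrite /adj ffunE.
Qed.

Lemma lambda_restr G : lambda (restr G) <= lambda G.
Proof.
apply/bigmax_leqP=> H HO.
have [H' [H1 H2]] := lift_orbit HO.
rewrite -H2; apply: leq_trans (alpha_restr H') _.
exact: (leq_bigmax_cond (P := fun H => H \in lc_orbit G)).
Qed.

Lemma simple_restr G : simple_graph G -> simple_graph (restr G).
Proof.
case/andP=> /forallP S1 /forallP S2; apply/andP; split.
  apply/forallP=> x; apply/forallP=> y; rewrite /adj !ffunE /=.
  exact: (forallP (S1 (w x)) (w y)).
by apply/forallP=> x; rewrite /adj ffunE; exact: S2.
Qed.
End R.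

Lemma Lambda_min n (G : graph n) : simple_graph G -> Lambda n <= lambda G.
Proof.
move=> sG; rewrite /Lambda.
have e0 : simple_graph (empty_graph n).
  by apply/andP; split; apply/forallP=> x; rewrite /adj /empty_graph ?ffunE //; apply/forallP=> y; rewrite !ffunE.
case: arg_minnP => // M _ ; exact.
Qed.

Theorem mainTheorem1 (n : nat) : 1 <= n -> Lambda n <= Lambda n.+1.
Proof.
move=> _.
have e0 : simple_graph (empty_graph n.+1).
  by apply/andP; split; apply/forallP=> x; rewrite /adj /empty_graph ?ffunE //; apply/forallP=> y; rewrite !ffunE.
rewrite {2}/Lambda; case: arg_minnP => // M sM _.
apply: leq_trans (lambda_restr M).
exact: Lambda_min (simple_restr sM).
Qed.
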